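(* Let $\alpha\in[0,1]$. (a) If $G$ is any graph and $H_1,H_2$ are $A_\alpha$-cospectral graphs with $\Gamma_{A_\alpha(H_1)}(x)=\Gamma_{A_\alpha(H_2)}(x)$, then $G\vee H_1$ and $G\vee H_2$ are $A_\alpha$-cospectral. (b) If $G_1,G_2$ are $A_\alpha$-cospectral graphs with $\Gamma_{A_\alpha(G_1)}(x)=\Gamma_{A_\alpha(G_2)}(x)$ and $H_1,H_2$ are $A_\alpha$-cospectral graphs with $\Gamma_{A_\alpha(H_1)}(x)=\Gamma_{A_\alpha(H_2)}(x)$, then $G_1\vee H_1$ and $G_2\vee H_2$ are $A_\alpha$-cospectral.
   Context: All graphs are finite, simple and undirected. For a graph $G$, $A(G)$ is its adjacency matrix, $D(G)$ its diagonal degree matrix, and $A_\alpha(G)=\alpha D(G)+(1-\alpha)A(G)$. Two graphs are $A_\alpha$-cospectral if $A_\alpha$ of each has the same multiset of eigenvalues. For an $n\times n$ matrix $M$, its coronal is $\Gamma_M(x)=\mathbf{1}_n^T(xI_n-M)^{-1}\mathbf{1}_n$ (a rational function of $x$), with $\mathbf{1}_n$ the all-ones vector. $G\vee H$ denotes the join: the disjoint union of $G$ and $H$ with all edges between $V(G)$ and $V(H)$ added. *)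

(* Defs.v *)
From HB Require Import structures.
From mathcomp Require Import all_boot all_order all_algebra.
Set Implicit Arguments. Unset Strict Implicit. Unset Printing Implicit Defensive.
Import Order.TTheory GRing.Theory Num.Theory.
Local Open Scope ring_scope.

Definition is_graph (n : nat) (e : rel 'I_n) : Prop :=
  symmetric e /\ irreflexive e.

Definition adjmx (R : nzRingType) (n : nat) (e : rel 'I_n) : 'M[R]_n :=
  \matrix_(i, j) (e i j)%:R.

Definition degmx (R : nzRingType) (n : nat) (e : rel 'I_n) : 'M[R]_n :=
  \matrix_(i, j) ((i == j)%:R * (#|[set k | e i k]|)%:R).

Definition Aalpha (R : nzRingType) (alpha : R) (n : nat) (e : rel 'I_n) : 'M[R]_n :=
  alpha *: degmx R e + (1 - alpha) *: adjmx R e.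

(* Join G \/ H on 'I_(n+m): G on the first n vertices, H on the last m,
   all edges between the two parts. *)
Definition gjoin (n m : nat) (e : rel 'I_n) (f : rel 'I_m) : rel 'I_(n + m) :=
  fun i j => match split i, split j with
             | inl a, inl b => e a b
             | inr a, inr b => f a b
             | _, _ => true
             end.

(* Cospectral: same multiset of eigenvalues, i.e. same characteristic
   polynomial (the sizes may a priori differ; equality forces them equal). *)
Definition cospectral (R : comNzRingType) (n m : nat) (A : 'M[R]_n) (B : 'M[R]_m) : Prop :=
  char_poly A = char_poly B.

(* Coronal Gamma_M(x) = 1^T (xI - M)^{-1} 1, as an element of the field of
   rational functions R(x) = {fraction {poly R}}. *)
Definition coronal (R : idomainType) (n : nat) (M : 'M[R]_n) : {fraction {poly R}} :=
  let XM := map_mx (@tofrac _) (char_poly_mx M) in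
  \sum_(i < n) \sum_(j < n) (invmx XM) i j.

(* Main.v *)
Require Import Defs.
From HB Require Import structures.
From mathcomp Require Import all_boot all_order all_algebra.
From mathcomp Require Import ring.
Import Order.TTheory GRing.Theory Num.Theory.
Local Open Scope ring_scope.
Set Implicit Arguments. Unset Strict Implicit.

Local Notation "x %:F" := (@tofrac _ x).


Lemma rank1 (K : fieldType) m (w : 'cV[K]_m) (v : 'rV[K]_m) :
  \det (1%:M - w *m v) = 1 - (v *m w) 0 0.
Proof.
have E1 : block_mx (1%:M : 'M_1) v w 1%:M =
   block_mx 1%:M 0 w 1%:M *m block_mx 1%:M v 0 (1%:M - w *m v).
  rewrite mulmx_block !mulmx0 !mul0mx !mulmx1 !mul1mx ?addr0 ?add0r.
  by rewrite addrC subrK.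
have E2 : block_mx (1%:M : 'M_1) v w 1%:M =
   block_mx (1%:M - v *m w) v 0 1%:M *m block_mx 1%:M 0 w 1%:M.
  rewrite mulmx_block !mulmx0 !mul0mx !mulmx1 !mul1mx ?addr0 ?add0r.
  by rewrite subrK.
have := congr1 determinant E1; rewrite E2 !det_mulmx.
rewrite (det_lblock (1%:M : 'M[K]_1) w 1%:M) !det_ublock !det1 !mul1r !mulr1 => <-.
by rewrite det_mx11 !mxE.
Qed.

Definition gam (K : fieldType) n (M : 'M[K]_n) : K :=
  ((const_mx 1 : 'rV[K]_n) *m invmx M *m (const_mx 1 : 'cV[K]_n)) 0 0.

Lemma constE (K : fieldType) p m (a : K) :
  (const_mx a : 'M[K]_(p, m)) = a *: ((const_mx 1 : 'cV[K]_p) *m (const_mx 1 : 'rV[K]_m)).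
Proof. by apply/matrixP=> i j; rewrite !mxE big_ord1 !mxE !mulr1. Qed.



Lemma det_join (K : fieldType) p m (P : 'M[K]_p) (Q : 'M[K]_m) (a b : K) :
  P \in unitmx -> Q \in unitmx ->
  \det (block_mx P (const_mx a) (const_mx b) Q) =
  \det P * \det Q * (1 - a * b * gam P * gam Q).
Proof.
move=> uP uQ.
set up := (const_mx 1 : 'cV[K]_p); set rp := (const_mx 1 : 'rV[K]_p).
set um := (const_mx 1 : 'cV[K]_m); set rm := (const_mx 1 : 'rV[K]_m).
have gP : rp *m invmx P *m up = (gam P)%:M by rewrite {1}(mx11_scalar (_ *m _ *m _)).
have gQ : rm *m invmx Q *m um = (gam Q)%:M by rewrite {1}(mx11_scalar (_ *m _ *m _)).
rewrite (constE p m a) (constE m p b) -/up -/rp -/um -/rm.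
pose T := block_mx 1%:M (- (a *: (invmx P *m up *m rm))) 0 (1%:M : 'M[K]_m).
have dT : \det T = 1 by rewrite det_ublock !det1 mulr1.
have E : block_mx P (a *: (up *m rm)) (b *: (um *m rp)) Q *m T =
   block_mx P 0 (b *: (um *m rp)) (Q - (a * b * gam P) *: (um *m rm)).
  rewrite mulmx_block !mulmx0 !mulmx1 !addr0.
  congr block_mx.
  - by rewrite mulmxN -scalemxAr !mulmxA mulmxV // mul1mx addNr.
  - rewrite addrC mulmxN -scalemxAr -scalemxAl !mulmxA -(mulmxA um) -(mulmxA um) gP.
    by rewrite mul_mx_scalar -scalemxAl !scalerA.
have dE := congr1 determinant E; rewrite det_mulmx dT mulr1 in dE; rewrite dE.
rewrite det_lblock -[RHS]mulrA; congr (_ * _).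
have -> : Q - (a * b * gam P) *: (um *m rm) =
     Q *m (1%:M - ((a * b * gam P) *: (invmx Q *m um)) *m rm).
  by rewrite mulmxBr mulmx1 -scalemxAl -scalemxAr !mulmxA mulmxV // mul1mx.
rewrite det_mulmx rank1; congr (_ * (1 - _)).
by rewrite -scalemxAr mxE mulmxA gQ mxE eqxx mulr1n.
Qed.



Definition Ncor (R : fieldType) n (M : 'M[R]_n) : {poly R} :=
  \sum_(i < n) \sum_(j < n) (\adj (char_poly_mx M)) i j.

Lemma char_poly_neq0 (R : fieldType) n (M : 'M[R]_n) : char_poly M != 0.
Proof. exact: monic_neq0 (char_poly_monic M). Qed.

Lemma XM_unit (R : fieldType) n (M : 'M[R]_n) : map_mx (@tofrac _) (char_poly_mx M) \in unitmx.
Proof. by rewrite unitmxE det_map_mx unitfE tofrac_eq0 char_poly_neq0. Qed.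

Lemma coronalE (R : fieldType) n (M : 'M[R]_n) :
  coronal M = ((char_poly M)%:F)^-1 * (Ncor M)%:F.
Proof.
rewrite /coronal /invmx XM_unit det_map_mx -map_mx_adj -/(char_poly M) /Ncor [X in _ = _ * X]rmorph_sum mulr_sumr.
apply: eq_bigr => i _; rewrite [X in _ = _ * X]rmorph_sum mulr_sumr; apply: eq_bigr => j _.
by rewrite !mxE.
Qed.

Lemma gamE (R : fieldType) n (M : 'M[R]_n) :
  gam (map_mx (@tofrac _) (char_poly_mx M)) = coronal M.
Proof.
rewrite /gam /coronal mxE.
under eq_bigr => i _ do rewrite [X in _ * X]mxE mulr1 mxE.
rewrite exchange_big; apply: eq_bigr => i _; apply: eq_bigr => j _.
by rewrite mxE mul1r.
Qed.

Lemma Ncor_eq (R : fieldType) n (A1 A2 : 'M[R]_n) : char_poly A1 = char_poly A2 ->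
  coronal A1 = coronal A2 -> Ncor A1 = Ncor A2.
Proof.
move=> e; rewrite !coronalE e => /mulfI.
rewrite invr_eq0 tofrac_eq0 -e char_poly_neq0 => /(_ isT) /eqP.
by rewrite tofrac_eq => /eqP.
Qed.


Lemma alg_id (K : fieldType) (a b cc na nb : K) : a != 0 -> b != 0 ->
  a * b * (1 - - cc * - cc * (a^-1 * na) * (b^-1 * nb)) = a * b - cc * cc * na * nb.
Proof. move=> ha hb; by field; rewrite hb ha. Qed.


Lemma cpm_block (R : fieldType) p m (A : 'M[R]_p) (B : 'M[R]_m) C D :
  char_poly_mx (block_mx A C D B) =
  block_mx (char_poly_mx A) (- map_mx polyC C) (- map_mx polyC D) (char_poly_mx B).
Proof.
by rewrite /char_poly_mx scalar_mx_block map_block_mx opp_block_mx add_block_mx !sub0r.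
Qed.

Lemma char_poly_join (R : fieldType) p m (A : 'M[R]_p) (B : 'M[R]_m) (c : R) :
  char_poly (block_mx A (const_mx c) (const_mx c) B) =
  char_poly A * char_poly B - c%:P ^+ 2 * Ncor A * Ncor B.
Proof.
apply/eqP; rewrite -tofrac_eq; apply/eqP.
rewrite /char_poly -det_map_mx cpm_block map_block_mx.
have mc : forall k l, map_mx (@tofrac _) (- map_mx polyC (const_mx c : 'M[R]_(k, l)))
   = const_mx (- (c%:P)%:F).
  by move=> k l; apply/matrixP=> i j; rewrite !mxE rmorphN.
have dX : forall k (M : 'M[R]_k), \det (map_mx (@tofrac _) (char_poly_mx M)) = (char_poly M)%:F.
  by move=> k M; rewrite det_map_mx.
rewrite !mc det_join ?XM_unit // !gamE !coronalE !dX.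
have hA := char_poly_neq0 A; have hB := char_poly_neq0 B.
rewrite -(tofrac_eq0 (char_poly A)) in hA.
rewrite -(tofrac_eq0 (char_poly B)) in hB.
rewrite tofracB !tofracM.
move: (char_poly A)%:F hA (char_poly B)%:F hB (Ncor A)%:F (Ncor B)%:F (c%:P)%:F => a ha b hb na nb cc.
exact: alg_id.
Qed.



Lemma cpm_shift (R : fieldType) n (A : 'M[R]_n) (s : R) :
  char_poly_mx (A + s%:M) = map_mx (comp_poly ('X - s%:P)) (char_poly_mx A).
Proof.
apply/matrixP=> i j; rewrite !mxE raddfB /= comp_polyC raddfMn /= comp_polyX.
case: (i == j); rewrite /= ?mulr1n ?mulr0n ?addr0 ?sub0r ?polyCD ?opprD ?addrA //.
by rewrite -!addrA [(- _) + _]addrC.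
Qed.

Lemma char_poly_shift (R : fieldType) n (A : 'M[R]_n) (s : R) :
  char_poly (A + s%:M) = char_poly A \Po ('X - s%:P).
Proof. by rewrite /char_poly cpm_shift det_map_mx. Qed.

Lemma Ncor_shift (R : fieldType) n (A : 'M[R]_n) (s : R) :
  Ncor (A + s%:M) = Ncor A \Po ('X - s%:P).
Proof.
rewrite /Ncor cpm_shift -map_mx_adj rmorph_sum; apply: eq_bigr => i _.
rewrite rmorph_sum; apply: eq_bigr => j _; by rewrite mxE.
Qed.


Lemma splitl p m (j : 'I_p) : split (lshift m j) = inl j.
Proof. exact: (unsplitK (inl j)). Qed.
Lemma splitr p m (j : 'I_m) : split (rshift p j) = inr j.
Proof. exact: (unsplitK (inr j)). Qed.

Lemma deg_l p m (e : rel 'I_p) (f : rel 'I_m) (a : 'I_p) :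
  #|[set k | gjoin e f (lshift m a) k]| = (#|[set k | e a k]| + m)%N.
Proof.
rewrite -!sum1dep_card big_split_ord /=.
congr (_ + _)%N.
  by apply: eq_bigl => i; rewrite /gjoin !splitl.
rewrite (eq_bigl predT); last by move=> i; rewrite /gjoin splitl splitr.
by rewrite sum1_card card_ord.
Qed.

Lemma deg_r p m (e : rel 'I_p) (f : rel 'I_m) (a : 'I_m) :
  #|[set k | gjoin e f (rshift p a) k]| = (p + #|[set k | f a k]|)%N.
Proof.
rewrite -!sum1dep_card big_split_ord /=.
congr (_ + _)%N.
  rewrite (eq_bigl predT); last by move=> i; rewrite /gjoin splitl splitr.
  by rewrite sum1_card card_ord.
by apply: eq_bigl => i; rewrite /gjoin !splitr.
Qed.

Lemma Aalpha_join (R : fieldType) (al : R) p m (e : rel 'I_p) (f : rel 'I_m) :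
  Aalpha al (gjoin e f) =
  block_mx (Aalpha al e + (al * m%:R)%:M) (const_mx (1 - al))
           (const_mx (1 - al)) (Aalpha al f + (al * p%:R)%:M).
Proof.
apply/matrixP=> i j; rewrite -(splitK i) -(splitK j).
case: (split i) => a; case: (split j) => b /=.
- rewrite block_mxEul !mxE deg_l /gjoin !splitl eq_lshift.
  case: (a == b); rewrite /= ?mulr1n ?mulr0n ?natrD; ring.
- rewrite block_mxEur !mxE /gjoin splitl splitr eq_lrshift /=; ring.
- rewrite block_mxEdl !mxE /gjoin splitl splitr eq_rlshift /=; ring.
- rewrite block_mxEdr !mxE deg_r /gjoin !splitr eq_rshift.
  case: (a == b); rewrite /= ?mulr1n ?mulr0n ?natrD; ring.
Qed.

Theorem corollary3p2 (R : realFieldType) (alpha : R)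
    (ha0 : 0 <= alpha) (ha1 : alpha <= 1) :
  (forall (p n1 n2 : nat) (G : rel 'I_p) (H1 : rel 'I_n1) (H2 : rel 'I_n2),
     is_graph G -> is_graph H1 -> is_graph H2 ->
     cospectral (Aalpha alpha H1) (Aalpha alpha H2) ->
     coronal (Aalpha alpha H1) = coronal (Aalpha alpha H2) ->
     cospectral (Aalpha alpha (gjoin G H1)) (Aalpha alpha (gjoin G H2)))
  /\
  (forall (p1 p2 n1 n2 : nat) (G1 : rel 'I_p1) (G2 : rel 'I_p2)
          (H1 : rel 'I_n1) (H2 : rel 'I_n2),
     is_graph G1 -> is_graph G2 -> is_graph H1 -> is_graph H2 ->
     cospectral (Aalpha alpha G1) (Aalpha alpha G2) ->
     coronal (Aalpha alpha G1) = coronal (Aalpha alpha G2) ->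
     cospectral (Aalpha alpha H1) (Aalpha alpha H2) ->
     coronal (Aalpha alpha H1) = coronal (Aalpha alpha H2) ->
     cospectral (Aalpha alpha (gjoin G1 H1)) (Aalpha alpha (gjoin G2 H2))).
Proof.
have partb : forall (p1 p2 n1 n2 : nat) (G1 : rel 'I_p1) (G2 : rel 'I_p2)
          (H1 : rel 'I_n1) (H2 : rel 'I_n2),
     cospectral (Aalpha alpha G1) (Aalpha alpha G2) ->
     coronal (Aalpha alpha G1) = coronal (Aalpha alpha G2) ->
     cospectral (Aalpha alpha H1) (Aalpha alpha H2) ->
     coronal (Aalpha alpha H1) = coronal (Aalpha alpha H2) ->
     cospectral (Aalpha alpha (gjoin G1 H1)) (Aalpha alpha (gjoin G2 H2)).
  move=> p1 p2 n1 n2 G1 G2 H1 H2 cG corG cH corH.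
  rewrite /cospectral in cG cH *.
  have ep : p1 = p2 by have := size_char_poly (Aalpha alpha G1); rewrite cG size_char_poly => -[].
  have en : n1 = n2 by have := size_char_poly (Aalpha alpha H1); rewrite cH size_char_poly => -[].
  subst p2 n2.
  rewrite !Aalpha_join !char_poly_join !char_poly_shift !Ncor_shift.
  by rewrite cG cH (Ncor_eq cG corG) (Ncor_eq cH corH).
split.
  move=> p n1 n2 G H1 H2 _ _ _ cH corH; exact: partb.
move=> p1 p2 n1 n2 G1 G2 H1 H2 _ _ _ _; exact: partb.
Qed.
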